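(* Let $r_{\rm A}>0$, $\theta_{\rm A}\in\,]0,\pi/2[$, and let $0<x_{\rm B}<x_{\rm A}$ be defined by $x_{\rm A}+x_{\rm B}=2r_{\rm A}$, $x_{\rm A}-x_{\rm B}=2r_{\rm A}\cos\theta_{\rm A}$ (so that $\sqrt{x_{\rm B}/x_{\rm A}}=\tan(\theta_{\rm A}/2)$ and $\sqrt{x_{\rm A}x_{\rm B}}=r_{\rm A}\sin\theta_{\rm A}$). Define $$v_{\rm A}(\eta)=\frac{\eta-\sqrt{x_{\rm B}/x_{\rm A}}}{\sqrt{(x_{\rm A}+x_{\rm B})/2-\eta\sqrt{x_{\rm A}x_{\rm B}}}}.$$ Then $\eta\mapsto v_{\rm A}(\eta)$ is a bijection from $]-\infty,1[$ onto $]-\infty,v_E[$, $v_E=\sqrt{2/x_{\rm A}}$, and for every $\eta\in\,]-\infty,1[$: $$T_D^S(\eta)=T_D^R(v_{\rm A}(\eta)),\qquad H^S(\eta)=H^R(v_{\rm A}(\eta)),$$ where $H^S(\eta)=\dfrac{\eta^2-1}{2r_{\rm A}(1-\eta\sin\theta_{\rm A})}$ and $H^R(v)=\tfrac12v^2-\tfrac1{x_{\rm A}}$.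
   Context: Kepler problem normalized as $\ddot q=-q/|q|^3$, center ${\rm O}$ at the origin. $T_D^S(\eta)$ is the elapsed time of the direct Keplerian arc from ${\rm A}=(r_{\rm A}\cos\theta_{\rm A},r_{\rm A}\sin\theta_{\rm A})$ to ${\rm B}=(-r_{\rm A}\cos\theta_{\rm A},r_{\rm A}\sin\theta_{\rm A})$ lying on the conic $r=r_{\rm A}(1-\eta\sin\theta_{\rm A})/(1-\eta\sin\theta)$ (polar coordinates about ${\rm O}$), traversed with $\theta$ increasing from $\theta_{\rm A}$ to $\pi-\theta_{\rm A}$; explicitly $T_D^S(\eta)=\int_{\theta_{\rm A}}^{\pi-\theta_{\rm A}}r_{\rm A}^{3/2}(1-\eta\sin\theta_{\rm A})^{3/2}(1-\eta\sin\theta)^{-2}{\rm d}\theta$; $H^S(\eta)$ is its energy $|\dot q|^2/2-1/|q|$. $T_D^R(v)$, for $v<\sqrt{2/x_{\rm A}}$, is the first time after $t_{\rm A}$ (minus $t_{\rm A}$) at which the solution of $\ddot x=-1/x^2$ with $x(t_{\rm A})=x_{\rm A}$, $\dot x(t_{\rm A})=v$ reaches $x_{\rm B}$ (this happens before any collision with $0$); $H^R(v)$ is its energy. *)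

(* Defs.v *)
From Stdlib Require Import Reals Lra.
Open Scope R_scope.

Definition TDS_integrand (rA thA eta : R) (th : R) : R :=
  Rpower rA (3/2) * Rpower (1 - eta * sin thA) (3/2) / (1 - eta * sin th) ^ 2.

Definition HS (rA thA eta : R) : R :=
  (eta ^ 2 - 1) / (2 * rA * (1 - eta * sin thA)).

Definition HR (xA v : R) : R := / 2 * v ^ 2 - / xA.

Definition vA (xA xB eta : R) : R :=
  (eta - sqrt (xB / xA)) / sqrt ((xA + xB) / 2 - eta * sqrt (xA * xB)).

(* x (with velocity x') solves  x'' = -1/x^2  with x > 0 on [0,T]
   (time origin t_A = 0; the equation is autonomous). *)
Definition radial_sol (x x' : R -> R) (T : R) : Prop :=
  forall t, 0 <= t <= T ->
    0 < x t /\ derivable_pt_lim x t (x' t) /\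
    derivable_pt_lim x' t (- / (x t) ^ 2).

Definition is_TDR (xA xB v T : R) : Prop :=
  0 < T /\
  exists x x' : R -> R,
    radial_sol x x' T /\ x 0 = xA /\ x' 0 = v /\ x T = xB /\
    (forall t, 0 <= t < T -> x t <> xB).

(* Main.v *)
Require Import Defs.
From Stdlib Require Import Reals Lra Psatz.
Open Scope R_scope.
From Stdlib Require Import Ranalysis5 ClassicalEpsilon.
From Coquelicot Require Import Coquelicot.

Lemma sqrt_sq_pos x : 0 < x -> sqrt x * sqrt x = x.
Proof. intros; apply sqrt_sqrt; lra. Qed.

Lemma vA_eq rA s c eta : 0 < rA -> 0 < s -> 0 < c -> s^2 + c^2 = 1 -> 0 < 1 - eta*s ->
  vA (rA*(1+c)) (rA*(1-c)) eta = (c / sqrt (1-eta*s) - sqrt (1-eta*s)) / (s * sqrt rA).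
Proof.
  intros hr hs hc hsc hd. unfold vA.
  assert (e1 : rA*(1-c)/(rA*(1+c)) = (s/(1+c))^2).
  { field_simplify_eq; try lra. }
  assert (e2 : rA*(1+c)*(rA*(1-c)) = (rA*s)^2) by nra.
  assert (e3 : (rA*(1+c)+rA*(1-c))/2 - eta*(rA*s) = rA*(1-eta*s)) by field.
  rewrite e1, e2, !sqrt_pow2 by (apply Rlt_le; try apply Rdiv_lt_0_compat; nra).
  rewrite e3, sqrt_mult by lra.
  assert (hD := sqrt_lt_R0 _ hd). assert (hR := sqrt_lt_R0 _ hr).
  assert (hD2 := sqrt_sq_pos _ hd).
  set (D := sqrt (1-eta*s)) in *. set (Q := sqrt rA) in *.
  field_simplify_eq. all: try lra. replace (D^2) with (1-eta*s) by (rewrite <- hD2; ring).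
  assert (s^2 = (1-c)*(1+c)) by lra. nra.
Qed.

Lemma h_lt c D1 D2 : 0 < c -> 0 < D1 -> D1 < D2 -> c/D2 - D2 < c/D1 - D1.
Proof.
  intros hc h1 h12. assert (c/D2 < c/D1).
  { apply Rmult_lt_compat_l; [lra|]. apply Rinv_lt_contravar; nra. } lra.
Qed.

Lemma bound_eq rA s c : 0 < rA -> 0 < s -> 0 < c -> s^2 + c^2 = 1 ->
  sqrt (2/(rA*(1+c))) = (c / sqrt (1-s) - sqrt (1-s)) / (s * sqrt rA).
Proof.
  intros hr hs hc hsc.
  assert (hs1 : s < 1) by nra. assert (hcs : 1 - s < c) by nra.
  assert (hD := sqrt_lt_R0 (1-s) ltac:(lra)). assert (hR := sqrt_lt_R0 _ hr).
  assert (hD2 := sqrt_sq_pos (1-s) ltac:(lra)). assert (hR2 := sqrt_sq_pos _ hr).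
  set (D := sqrt (1-s)) in *. set (Q := sqrt rA) in *.
  assert (hpos : 0 <= (c / D - D) / (s * Q)).
  { apply Rlt_le, Rdiv_lt_0_compat; [|nra].
    assert (c/D = c/D) by auto. unfold Rdiv. 
    apply Rlt_Rminus. apply (Rmult_lt_reg_r D); [lra|].
    rewrite Rmult_assoc, Rinv_l by lra. lra. }
  rewrite <- (sqrt_pow2 _ hpos). f_equal.
  field_simplify_eq. all: try lra.
  replace (D^4) with ((1-s)^2) by (rewrite <- hD2; ring).
  replace (D^2) with (1-s) by (rewrite <- hD2; ring).
  replace (Q^2) with rA by (rewrite <- hR2; ring).
  transitivity (rA*(2*(1-s)*s^2 + (s^2+c^2-1)*(c-1+2*s))); [rewrite hsc; ring | ring].
Qed.

Lemma one_minus_pos s eta : 0 < s < 1 -> eta < 1 -> 0 < 1 - eta*s.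
Proof. intros. destruct (Rle_lt_dec 0 eta); nra. Qed.

Lemma parts123 rA s c : 0 < rA -> 0 < s -> 0 < c -> s^2 + c^2 = 1 ->
  let xA := rA*(1+c) in let xB := rA*(1-c) in
  (forall eta, eta < 1 -> vA xA xB eta < sqrt (2 / xA)) /\
  (forall e1 e2, e1 < 1 -> e2 < 1 -> vA xA xB e1 = vA xA xB e2 -> e1 = e2) /\
  (forall v, v < sqrt (2 / xA) -> exists eta, eta < 1 /\ vA xA xB eta = v).
Proof.
  intros hr hs hc hsc xA xB.
  assert (hs1 : s < 1) by nra. assert (hcs : 1 - s < c) by nra.
  assert (hR := sqrt_lt_R0 _ hr).
  assert (hsQ : 0 < s * sqrt rA) by nra.
  unfold xA, xB. rewrite (bound_eq rA s c) by assumption.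
  assert (hD1 := sqrt_lt_R0 (1-s) ltac:(lra)).
  split; [|split].
  - intros eta he. assert (hd := one_minus_pos s eta ltac:(lra) he).
    rewrite (vA_eq rA s c eta) by assumption.
    unfold Rdiv at 1 3. apply Rmult_lt_compat_r; [apply Rinv_0_lt_compat; lra|].
    apply h_lt; auto. apply sqrt_lt_1; nra.
  - intros e1 e2 h1 h2 heq.
    assert (hd1 := one_minus_pos s e1 ltac:(lra) h1).
    assert (hd2 := one_minus_pos s e2 ltac:(lra) h2).
    rewrite (vA_eq rA s c e1), (vA_eq rA s c e2) in heq by assumption.
    assert (hD1' := sqrt_lt_R0 _ hd1). assert (hD2' := sqrt_lt_R0 _ hd2).
    assert (hq1 := sqrt_sq_pos _ hd1). assert (hq2 := sqrt_sq_pos _ hd2).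
    destruct (Rtotal_order (sqrt (1-e1*s)) (sqrt (1-e2*s))) as [hl|[he|hl]].
    + apply h_lt with (c := c) in hl; auto.
      exfalso. assert (hh: forall a b, a < b -> a / (s*sqrt rA) < b/(s*sqrt rA)).
      { intros. unfold Rdiv; apply Rmult_lt_compat_r; [apply Rinv_0_lt_compat|]; lra. }
      apply hh in hl. lra.
    + assert (1 - e1*s = 1 - e2*s) by (rewrite <- hq1, <- hq2, he; auto). nra.
    + apply h_lt with (c := c) in hl; auto.
      exfalso. assert (hh: forall a b, a < b -> a / (s*sqrt rA) < b/(s*sqrt rA)).
      { intros. unfold Rdiv; apply Rmult_lt_compat_r; [apply Rinv_0_lt_compat|]; lra. }
      apply hh in hl. lra.
  - intros v hv.
    set (b := v * (s*sqrt rA)).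
    assert (hb2 : 0 <= b^2 + 4*c) by nra.
    set (D := (-b + sqrt (b^2+4*c))/2).
    assert (hsq := sqrt_sqrt _ hb2).
    assert (hsq0 := sqrt_pos (b^2+4*c)).
    assert (hDpos : 0 < D).
    { unfold D. assert (b < sqrt (b^2+4*c)); [|lra].
      destruct (Rlt_or_le b 0); [lra|]. apply Rsqr_incrst_0; unfold Rsqr; nra. }
    assert (hDeq : D*D + b*D = c) by (unfold D; nra).
    assert (hhD : c/D - D = b).
    { apply (Rmult_eq_reg_r D); [|lra]. unfold Rdiv.
      rewrite Rmult_minus_distr_r, Rmult_assoc, Rinv_l by lra. nra. }
    assert (hvb : b < c / sqrt (1-s) - sqrt (1-s)).
    { unfold b. apply (Rmult_lt_reg_r (/(s*sqrt rA))); [apply Rinv_0_lt_compat; lra|].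
      rewrite Rmult_assoc, Rinv_r by lra. rewrite Rmult_1_r. exact hv. }
    assert (hD1D : sqrt (1-s) < D).
    { destruct (Rlt_or_le (sqrt (1-s)) D) as [|hle]; auto. exfalso.
      destruct hle as [hlt|heq].
      - apply h_lt with (c:=c) in hlt; auto. lra.
      - rewrite <- heq in hvb. lra. }
    assert (hq1 := sqrt_sq_pos (1-s) ltac:(lra)).
    exists ((1 - D*D)/s). split.
    + apply (Rmult_lt_reg_r s); [lra|]. unfold Rdiv.
      rewrite Rmult_assoc, Rinv_l by lra. nra.
    + assert (e : 1 - (1 - D*D)/s * s = D*D) by (field; lra).
      rewrite (vA_eq rA s c) by (auto; rewrite e; nra). rewrite e.
      rewrite sqrt_square by lra. rewrite hhD. unfold b. field. lra.
Qed.

Lemma dpl_ext f x l1 l2 : l1 = l2 -> derivable_pt_lim f x l1 -> derivable_pt_lim f x l2.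
Proof. intros ->; auto. Qed.

Lemma inverse_radial (tau G X W : R -> R) p q a b :
  p < a -> a < b -> b < q -> tau a = 0 ->
  (forall th, p < th < q -> derivable_pt_lim tau th (G th) /\ 0 < G th /\ 0 < X th /\
      derivable_pt_lim X th (W th * G th) /\ derivable_pt_lim W th (- / (X th)^2 * G th)) ->
  0 < tau b /\
  exists x x', radial_sol x x' (tau b) /\ x 0 = X a /\ x' 0 = W a /\ x (tau b) = X b /\
    (forall t, 0 <= t < tau b -> exists th, a <= th < b /\ x t = X th).
Proof.
  intros hpa hab hbq hta H.
  assert (incr : forall u v, p < u -> u < v -> v < q -> tau u < tau v).
  { intros u v hu huv hv.
    destruct (MVT_cor2 tau G u v huv) as [c0 [e hc0]].
    { intros c0 hc0. apply H; lra. }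
    assert (0 < G c0) by (apply H; lra). nra. }
  assert (inj : forall u v, p < u < q -> p < v < q -> tau u = tau v -> u = v).
  { intros u v hu hv he. destruct (Rtotal_order u v) as [h|[h|h]]; auto.
    - apply incr in h; lra.
    - apply incr in h; lra. }
  set (a' := (p+a)/2). set (b' := (b+q)/2).
  assert (hab' : a' < b') by (unfold a', b'; lra).
  assert (cont : forall th, a' <= th <= b' -> continuity_pt tau th).
  { intros th hth. apply derivable_continuous_pt. exists (G th). apply H. unfold a', b' in *; lra. }
  assert (Hex : forall t, exists th, (tau a' <= t <= tau b' -> a' <= th <= b' /\ tau th = t)).
  { intros t. destruct (Rle_dec (tau a') t) as [h1|h1]; [destruct (Rle_dec t (tau b')) as [h2|h2]|].
    - destruct (f_interv_is_interv tau a' b' t hab' (conj h1 h2) cont) as [th hth].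
      exists th; auto.
    - exists a'; intros; lra.
    - exists a'; intros; lra. }
  set (Th := fun t => proj1_sig (constructive_indefinite_description _ (Hex t))).
  assert (ThP : forall t, tau a' <= t <= tau b' -> a' <= Th t <= b' /\ tau (Th t) = t).
  { intros t ht. unfold Th. destruct (constructive_indefinite_description _ (Hex t)); simpl; auto. }
  assert (ThK : forall th, a' <= th <= b' -> Th (tau th) = th).
  { intros th hth.
    assert (hb1 : tau a' <= tau th <= tau b').
    { destruct hth as [[h1|h1] [h2|h2]]; subst; split;
      try (apply Rlt_le, incr; unfold a', b' in *; lra); lra. }
    destruct (ThP _ hb1) as [h1 h2]. apply inj; auto; unfold a', b' in *; lra. }
  assert (ta' : tau a' < 0) by (rewrite <- hta; apply incr; unfold a'; lra).
  assert (tb' : tau b < tau b') by (apply incr; unfold b'; lra).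
  assert (tb : 0 < tau b) by (rewrite <- hta; apply incr; lra).
  split; [exact tb|].
  assert (dTh : forall t, tau a' < t < tau b' -> derivable_pt_lim Th t (/ G (Th t))).
  { intros t ht.
    assert (Prf : forall a0, Th (tau a') <= a0 <= Th (tau b') -> derivable_pt tau a0).
    { intros a0 ha0. rewrite !ThK in ha0 by lra. exists (G a0). apply H. unfold a', b' in *; lra. }
    assert (Prg : continuity_pt Th t).
    { apply (continuity_pt_recip_interv tau Th a' b' hab').
      - intros u v hu huv hv. apply incr; unfold a', b' in *; lra.
      - intros u h1 h2. unfold comp, id. apply ThP; lra.
      - intros u h1 h2. apply ThP; lra.
      - exact cont.
      - lra. }
    assert (Prg_incr : Th (tau a') <= Th t <= Th (tau b')).
    { rewrite !ThK by lra. apply ThP; lra. }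
    assert (hlt : tau a' < tau b') by lra.
    assert (R1 := derivable_pt_lim_recip_interv tau Th (tau a') (tau b') t Prf Prg hlt ht Prg_incr).
    assert (hTt : a' <= Th t <= b') by (apply ThP; lra).
    assert (hd : derive_pt tau (Th t) (Prf (Th t) Prg_incr) = G (Th t)).
    { apply derive_pt_eq_0. apply H. unfold a', b' in *; lra. }
    rewrite hd in R1. assert (0 < G (Th t)) by (apply H; unfold a', b' in *; lra).
    apply (dpl_ext _ _ (1 / G (Th t))); [field; lra|].
    apply R1; [| lra].
    intros u hu. unfold comp, id. apply ThP; lra. }
  assert (Th0 : Th 0 = a) by (rewrite <- hta; apply ThK; unfold a', b'; lra).
  assert (ThT : Th (tau b) = b) by (apply ThK; unfold a', b'; lra).
  assert (Thab : forall t, 0 <= t <= tau b -> a <= Th t <= b).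
  { intros t ht. destruct (ThP t ltac:(lra)) as [h1 h2]. split.
    - destruct (Rlt_or_le (Th t) a) as [h|h]; auto. apply incr in h; unfold a' in *; lra.
    - destruct (Rlt_or_le b (Th t)) as [h|h]; auto. apply incr in h; unfold b' in *; lra. }
  exists (fun t => X (Th t)), (fun t => W (Th t)).
  split; [|split; [|split; [|split]]].
  - intros t ht. assert (hT := Thab t ht). assert (hT' : tau a' < t < tau b') by lra.
    assert (hpq : p < Th t < q) by lra.
    destruct (H _ hpq) as [_ [hG [hX [dX dW]]]].
    split; [exact hX|split].
    + apply (dpl_ext _ _ ((W (Th t) * G (Th t)) * / G (Th t))); [field; lra|].
      apply (derivable_pt_lim_comp Th X); auto.
    + apply (dpl_ext _ _ ((- / (X (Th t))^2 * G (Th t)) * / G (Th t))); [field; lra|].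
      apply (derivable_pt_lim_comp Th W); auto.
  - simpl; rewrite Th0; auto.
  - simpl; rewrite Th0; auto.
  - simpl; rewrite ThT; auto.
  - intros t ht. exists (Th t). split; auto.
    assert (hT := Thab t ltac:(lra)). split; [lra|].
    destruct (proj2 hT) as [h|h]; auto.
    exfalso. destruct (ThP t ltac:(lra)) as [_ h2]. rewrite h in h2. lra.
Qed.

Definition Xf eta l th := l*(1+cos th)/(1 - eta*sin th).
Definition Wf eta l th := (eta - sin th/(1+cos th))/sqrt l.
Definition Gf eta K th := K*(1+cos th)/(1-eta*sin th)^2.

Lemma trig_facts eta th : eta < 1 -> 0 < th < PI -> 0 < sin th /\ 0 < 1 + cos th /\ 0 < 1 - eta * sin th.
Proof.
  intros he hth. assert (hs := sin_gt_0 _ (proj1 hth) (proj2 hth)).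
  assert (hsc := sin2_cos2 th). unfold Rsqr in hsc.
  assert (hs1 : sin th <= 1) by apply SIN_bound.
  assert (hc : -1 < cos th).
  { destruct (Rlt_or_le (-1) (cos th)); auto. assert (hc1 := COS_bound th). nra. }
  repeat split; try lra. destruct (Rle_lt_dec 0 eta); nra.
Qed.

Lemma dX eta l K th : eta < 1 -> 0 < th < PI -> 0 < l -> K = l * sqrt l ->
  derivable_pt_lim (Xf eta l) th (Wf eta l th * Gf eta K th).
Proof.
  intros he hth hl hK. destruct (trig_facts eta th he hth) as [hs [hc hd]].
  assert (hsc := sin2_cos2 th). unfold Rsqr in hsc.
  assert (hq := sqrt_lt_R0 _ hl). assert (hq2 : sqrt l * sqrt l = l) by (apply sqrt_sqrt; lra).
  apply is_derive_Reals. unfold Xf. auto_derive. lra.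
  unfold Wf, Gf. rewrite hK. field_simplify_eq; try lra.
  assert (hc2: cos th ^2 = 1 - sin th ^2) by nra. rewrite hc2. ring.
Qed.

Lemma dW eta l K th : eta < 1 -> 0 < th < PI -> 0 < l -> K = l * sqrt l ->
  derivable_pt_lim (Wf eta l) th (- / (Xf eta l th)^2 * Gf eta K th).
Proof.
  intros he hth hl hK. destruct (trig_facts eta th he hth) as [hs [hc hd]].
  assert (hsc := sin2_cos2 th). unfold Rsqr in hsc.
  assert (hq := sqrt_lt_R0 _ hl). assert (hq2 : sqrt l * sqrt l = l) by (apply sqrt_sqrt; lra).
  apply is_derive_Reals. unfold Wf. auto_derive. repeat split; lra.
  unfold Xf, Gf. rewrite hK. field_simplify_eq; try lra.
  rewrite pow2_sqrt by lra.
  assert (hc2: cos th ^2 = 1 - sin th ^2) by nra. rewrite hc2. ring.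
Qed.

Lemma XG_pos eta l K th : eta < 1 -> 0 < th < PI -> 0 < l -> 0 < K -> 0 < Xf eta l th /\ 0 < Gf eta K th.
Proof.
  intros he hth hl hK. destruct (trig_facts eta th he hth) as [hs [hc hd]].
  unfold Xf, Gf. split; apply Rdiv_lt_0_compat; try nra; try (apply pow_lt; lra).
Qed.

Lemma G_cont eta K th : eta < 1 -> 0 < th < PI -> continuous (Gf eta K) th.
Proof.
  intros he hth. destruct (trig_facts eta th he hth) as [hs [hc hd]].
  apply (ex_derive_continuous (K:=R_AbsRing) (V:=R_NormedModule)). unfold Gf. auto_derive. nra.
Qed.

Lemma inmm a b z : Rmin a b <= z <= Rmax a b -> 0 < a < PI -> 0 < b < PI -> 0 < z < PI.
Proof. unfold Rmin, Rmax; destruct (Rle_dec a b); intros; lra. Qed.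

Lemma tau_deriv eta K thA th : eta < 1 -> 0 < thA < PI -> 0 < th < PI ->
  derivable_pt_lim (RInt (Gf eta K) thA) th (Gf eta K th).
Proof.
  intros he hA hth. apply is_derive_Reals. apply (is_derive_RInt _ _ thA).
  - apply (locally_interval _ th (Finite 0) (Finite PI)); simpl; try lra.
    intros y h1 h2. apply (RInt_correct (V:=R_CompleteNormedModule)). apply (ex_RInt_continuous (V:=R_CompleteNormedModule)).
    intros z hz. apply G_cont; auto. apply (inmm thA y); auto.
  - apply G_cont; auto.
Qed.

Lemma Rpower32 x : 0 < x -> Rpower x (3/2) = x * sqrt x.
Proof.
  intros hx. replace (3/2) with (1 + /2) by field.
  rewrite Rpower_plus, Rpower_1, Rpower_sqrt; auto.
Qed.

Definition Hcf eta K th := K * cos th / (1 - eta*sin th)^2.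
Definition Ccf eta K sA th := K * (sin th - sA) / ((1 - eta*sA) * (1 - eta*sin th)).

Lemma time_eq rA thA eta : 0 < rA -> 0 < thA < PI/2 -> eta < 1 ->
  exists pr : Riemann_integrable (TDS_integrand rA thA eta) thA (PI - thA),
    RInt (Gf eta (Rpower rA (3/2) * Rpower (1-eta*sin thA) (3/2))) thA (PI - thA) = RiemannInt pr.
Proof.
  intros hr hA he.
  assert (PI2 := PI2_1). set (K := Rpower rA (3/2) * Rpower (1-eta*sin thA) (3/2)).
  assert (inI : forall x, thA <= x <= PI - thA -> 0 < x < PI) by (intros; lra).
  assert (cT : forall x, 0 < x < PI -> continuous (TDS_integrand rA thA eta) x).
  { intros x hx. destruct (trig_facts eta x he hx) as [hs [hc hd]].
    apply (ex_derive_continuous (K:=R_AbsRing) (V:=R_NormedModule)). unfold TDS_integrand.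
    auto_derive. nra. }
  assert (cH : forall x, 0 < x < PI -> continuous (Hcf eta K) x).
  { intros x hx. destruct (trig_facts eta x he hx) as [hs [hc hd]].
    apply (ex_derive_continuous (K:=R_AbsRing) (V:=R_NormedModule)). unfold Hcf.
    auto_derive. nra. }
  assert (hle : thA <= PI - thA) by lra.
  assert (pr : Riemann_integrable (TDS_integrand rA thA eta) thA (PI - thA)).
  { apply continuity_implies_RiemannInt; auto. intros x hx.
    apply continuity_pt_filterlim. apply cT; auto. }
  exists pr. rewrite <- RInt_Reals.
  assert (mm : forall z, Rmin thA (PI-thA) <= z <= Rmax thA (PI-thA) -> 0 < z < PI).
  { intros z hz. apply (inmm thA (PI-thA)); auto; lra. }
  assert (e1 : ex_RInt (TDS_integrand rA thA eta) thA (PI - thA)).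
  { apply (ex_RInt_continuous (V:=R_CompleteNormedModule)). intros; apply cT; auto. }
  assert (e2 : ex_RInt (Hcf eta K) thA (PI - thA)).
  { apply (ex_RInt_continuous (V:=R_CompleteNormedModule)). intros; apply cH; auto. }
  rewrite (RInt_ext _ (fun x => plus (TDS_integrand rA thA eta x) (Hcf eta K x))).
  2:{ intros x hx. assert (hx' : 0 < x < PI) by (apply mm; lra).
      destruct (trig_facts eta x he hx') as [hs [hc hd]].
      unfold Gf, Hcf, TDS_integrand, K, plus; simpl. field. lra. }
  rewrite (RInt_plus (V:=R_CompleteNormedModule)) by auto.
  assert (hsA := sin_gt_0 thA ltac:(lra) ltac:(lra)).
  assert (hdA : 0 < 1 - eta * sin thA) by (destruct (trig_facts eta thA he ltac:(lra)); tauto).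
  assert (iH : is_RInt (Hcf eta K) thA (PI - thA) (minus (Ccf eta K (sin thA) (PI - thA)) (Ccf eta K (sin thA) thA))).
  { apply (is_RInt_derive (V:=R_CompleteNormedModule)).
    - intros x hx. assert (hx' := mm x hx). destruct (trig_facts eta x he hx') as [hs [hc hd]].
      unfold Ccf, Hcf. auto_derive. nra. field. lra.
    - intros x hx. apply cH; auto. }
  rewrite (is_RInt_unique _ _ _ _ iH).
  unfold Ccf. rewrite sin_PI_x. unfold minus, plus, opp; simpl. unfold Rminus. rewrite Rplus_opp_r. field.
Qed.

Lemma u_incr x y : 0 < x -> x < y -> y < PI -> sin x / (1 + cos x) < sin y / (1 + cos y).
Proof.
  intros hx hxy hy.
  destruct (MVT_cor2 (fun t => sin t / (1 + cos t)) (fun t => / (1 + cos t)) x y hxy) as [c0 [e hc0]].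
  { intros c0 hc0. destruct (trig_facts 0 c0 ltac:(lra) ltac:(lra)) as [hs [hc _]].
    assert (hsc := sin2_cos2 c0). unfold Rsqr in hsc.
    apply is_derive_Reals. auto_derive. lra. field_simplify_eq; try lra. }
  destruct (trig_facts 0 c0 ltac:(lra) ltac:(lra)) as [hs [hc _]].
  assert (0 < / (1 + cos c0)) by (apply Rinv_0_lt_compat; lra). nra.
Qed.

Lemma first_hit rA thA eta th : 0 < rA -> 0 < thA < PI/2 -> eta < 1 -> thA <= th < PI - thA ->
  Xf eta (rA * (1 - eta * sin thA)) th <> rA * (1 - cos thA).
Proof.
  intros hr hA he hth heq.
  assert (PI2 := PI2_1).
  set (s := sin thA) in *. set (c := cos thA) in *.
  assert (hs : 0 < s) by (unfold s; apply sin_gt_0; lra).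
  assert (hc : 0 < c) by (unfold c; apply cos_gt_0; lra).
  assert (hsc : s^2 + c^2 = 1) by (unfold s, c; rewrite <- (sin2_cos2 thA); unfold Rsqr; ring).
  assert (hs1 : s < 1) by nra. assert (hc1 : c < 1) by nra.
  destruct (trig_facts eta th he ltac:(lra)) as [hS [hC hD]].
  assert (hSC := sin2_cos2 th). unfold Rsqr in hSC.
  set (S := sin th) in *. set (C := cos th) in *.
  set (u := S / (1 + C)).
  assert (huB : u < s / (1 - c)).
  { assert (h := u_incr th (PI - thA) ltac:(lra) ltac:(lra) ltac:(lra)).
    rewrite sin_PI_x, Rtrigo_facts.cos_pi_minus in h. fold s c in h. unfold u. 
    replace (1 + - c) with (1 - c) in h by ring. exact h. }
  assert (huA : s / (1 + c) <= u).
  { destruct (proj1 hth) as [h|h].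
    - apply Rlt_le, (u_incr thA th); lra.
    - unfold u, S, C, s, c. rewrite h. lra. }
  assert (hS' : S = u * (1 + C)) by (unfold u; field; lra).
  assert (hu2 : (1 + C) * (1 + u^2) = 2).
  { assert (h1 : u^2 * (1+C)^2 = (1 - C)*(1+C)) by (rewrite hS' in hSC; nra).
    assert (h2 : u^2 * (1+C) = 1 - C).
    { apply (Rmult_eq_reg_r (1+C)); [|lra]. rewrite <- h1. ring. }
    nra. }
  unfold Xf in heq. fold S C in heq.
  assert (h3 : (1 - eta*s) * (1 + C) = (1 - c) * (1 - eta*S)).
  { assert (h3' : rA*(1-c)*(1-eta*S) = rA*(1-eta*s)*(1+C)).
    { rewrite <- heq. field. lra. }
    apply (Rmult_eq_reg_l rA); [|lra]. rewrite <- !Rmult_assoc. auto. }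
  assert (h4 : 2 * (1 - eta*s) = (1 - c) * (1 + u^2 - 2*eta*u)).
  { rewrite <- hu2 at 1. rewrite hS' in h3.
    transitivity ((1 - eta*s)*(1+C)*(1+u^2)); [ring|]. rewrite h3.
    transitivity ((1-c)*((1+u^2) - eta*u*((1+C)*(1+u^2)))); [ring|]. rewrite hu2. ring. }
  set (uB := s / (1 - c)) in *.
  assert (huBc : uB * (1 - c) = s) by (unfold uB; field; lra).
  assert (huAB : 2 < s/(1+c) + uB).
  { unfold uB. replace (s/(1+c) + s/(1-c)) with (2/s).
    - apply (Rmult_lt_reg_r s); [lra|]. unfold Rdiv. rewrite Rmult_assoc, Rinv_l by lra. nra.
    - field_simplify_eq; try lra. }
  assert (hQ : 2 * (1 - eta*s) - (1 - c) * (1 + u^2 - 2*eta*u) = (1 - c) * (uB - u) * (u - 2*eta + uB)).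
  { assert (hB2 : (1 - c) * uB^2 = 1 + c).
    { apply (Rmult_eq_reg_l (1 - c)); [|lra].
      transitivity ((uB*(1-c))^2); [ring|]. rewrite huBc. nra. }
    transitivity ((1-c)*(-u^2 + 2*eta*u) + (1 - c) * uB^2 - 2*eta*(uB*(1-c))); [|ring].
    rewrite hB2, huBc. ring. }
  assert (0 < (1 - c) * (uB - u) * (u - 2*eta + uB)).
  { apply Rmult_lt_0_compat; [apply Rmult_lt_0_compat|]; lra. }
  lra.
Qed.

Lemma vA_eq2 rA s c eta : 0 < rA -> 0 < s -> 0 < c -> s^2 + c^2 = 1 ->
  vA (rA*(1+c)) (rA*(1-c)) eta = (eta - s/(1+c)) / sqrt (rA*(1-eta*s)).
Proof.
  intros hr hs hc hsc. unfold vA.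
  assert (e1 : rA*(1-c)/(rA*(1+c)) = (s/(1+c))^2).
  { field_simplify_eq; try lra. }
  assert (e2 : rA*(1+c)*(rA*(1-c)) = (rA*s)^2) by nra.
  assert (e3 : (rA*(1+c)+rA*(1-c))/2 - eta*(rA*s) = rA*(1-eta*s)) by field.
  rewrite e1, e2, !sqrt_pow2 by (apply Rlt_le; try apply Rdiv_lt_0_compat; nra).
  rewrite e3. auto.
Qed.

Lemma energy rA s c eta : 0 < rA -> 0 < s -> 0 < c -> s^2 + c^2 = 1 -> 0 < 1 - eta*s ->
  (eta^2 - 1) / (2 * rA * (1 - eta * s)) = / 2 * (vA (rA*(1+c)) (rA*(1-c)) eta) ^ 2 - / (rA*(1+c)).
Proof.
  intros hr hs hc hsc hd. rewrite (vA_eq2 rA s c eta) by auto.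
  assert (hq : 0 < rA*(1-eta*s)) by nra.
  assert (hq2 := pow2_sqrt (rA*(1-eta*s)) ltac:(lra)).
  assert (hq0 := sqrt_lt_R0 _ hq).
  unfold Rdiv at 2. rewrite Rpow_mult_distr, pow_inv, hq2.
  field_simplify_eq; try lra.
Qed.

Theorem proposition3 (rA thA xA xB : R)
  (hrA : 0 < rA) (hthA : 0 < thA < PI / 2)
  (hsum : xA + xB = 2 * rA) (hdiff : xA - xB = 2 * rA * cos thA) :
  (* v_A is a bijection from ]-oo,1[ onto ]-oo, sqrt(2/xA)[ *)
  (forall eta, eta < 1 -> vA xA xB eta < sqrt (2 / xA)) /\
  (forall e1 e2, e1 < 1 -> e2 < 1 -> vA xA xB e1 = vA xA xB e2 -> e1 = e2) /\
  (forall v, v < sqrt (2 / xA) -> exists eta, eta < 1 /\ vA xA xB eta = v) /\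
  (* time and energy identities *)
  (forall eta, eta < 1 ->
     exists pr : Riemann_integrable (TDS_integrand rA thA eta) thA (PI - thA),
       is_TDR xA xB (vA xA xB eta) (RiemannInt pr) /\
       HS rA thA eta = HR xA (vA xA xB eta)).
Proof.
  assert (HxA : xA = rA * (1 + cos thA)) by lra.
  assert (HxB : xB = rA * (1 - cos thA)) by lra.
  subst xA xB.
  assert (PI2 := PI2_1).
  assert (hs : 0 < sin thA) by (apply sin_gt_0; lra).
  assert (hc : 0 < cos thA) by (apply cos_gt_0; lra).
  assert (hsc : sin thA ^2 + cos thA ^2 = 1) by (rewrite <- (sin2_cos2 thA); unfold Rsqr; ring).
  assert (hs1 : sin thA < 1) by nra.
  destruct (parts123 rA (sin thA) (cos thA) hrA hs hc hsc) as [P1 [P2 P3]].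
  split; [exact P1|split; [exact P2|split; [exact P3|]]].
  intros eta he.
  assert (hd : 0 < 1 - eta * sin thA) by (apply one_minus_pos; auto; lra).
  destruct (time_eq rA thA eta hrA hthA he) as [pr hpr].
  exists pr. split.
  2:{ unfold HS, HR. apply energy; auto. }
  rewrite <- hpr.
  set (l := rA * (1 - eta * sin thA)).
  assert (hl : 0 < l) by (unfold l; nra).
  set (K := Rpower rA (3/2) * Rpower (1 - eta * sin thA) (3/2)).
  assert (hK : K = l * sqrt l).
  { unfold K, l. rewrite !Rpower32 by lra. rewrite sqrt_mult by lra. ring. }
  assert (hKp : 0 < K) by (rewrite hK; apply Rmult_lt_0_compat; [|apply sqrt_lt_R0]; lra).
  destruct (inverse_radial (RInt (Gf eta K) thA) (Gf eta K) (Xf eta l) (Wf eta l) 0 PI thA (PI - thA))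
    as [hT [x [x' [hrad [h0 [h0' [hT' hfirst]]]]]]]; try lra.
  { apply (RInt_point (V:=R_CompleteNormedModule)). }
  { intros th hth. destruct (XG_pos eta l K th he hth hl hKp) as [hX hG].
    repeat split; auto.
    - apply tau_deriv; auto; lra.
    - apply dX; auto.
    - apply dW; auto. }
  split; [exact hT|]. exists x, x'.
  split; [exact hrad|split; [|split; [|split]]].
  - rewrite h0. unfold Xf, l. field. lra.
  - rewrite h0'. unfold Wf. rewrite (vA_eq2 rA (sin thA) (cos thA) eta) by auto. unfold l. reflexivity.
  - rewrite hT'. unfold Xf, l. rewrite sin_PI_x, Rtrigo_facts.cos_pi_minus. field. lra.
  - intros t ht. destruct (hfirst t ht) as [th [hth ->]].
    apply first_hit; auto.
Qed.
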